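(* Let $n\ge 2$ be an integer and let $Q_{4n}=\langle x,y : x^{2n}=1,\ x^n=y^2,\ yx=x^{-1}y\rangle$ be the generalized quaternion group of order $4n$. Let $\Gamma_{Q_{4n}}$ be its non-commuting graph. Then the spectrum of the distance matrix $D(\Gamma_{Q_{4n}})$ (eigenvalues counted with multiplicity, multiplicities being added if two of the listed values coincide) consists of: (a) $-2$ with multiplicity $3n-3$; (b) $0$ with multiplicity $n-1$; (c) $3(n-1)+\sqrt{5n^2-10n+9}$ and $3(n-1)-\sqrt{5n^2-10n+9}$, each with multiplicity $1$.
   Context: For a finite non-abelian group $G$ with centre $Z(G)$, the non-commuting graph $\Gamma_G$ is the simple undirected graph with vertex set $G\setminus Z(G)$, in which two distinct vertices $u,v$ are adjacent if and only if $uv\ne vu$. For a connected graph $H$, $d_{uv}$ denotes the length of a shortest path between vertices $u$ and $v$, and the distance matrix $D(H)$ is the matrix whose $(u,v)$-entry is $d_{uv}$. *)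

(* Defs.v *)
From mathcomp Require Import all_boot all_order all_algebra all_fingroup all_solvable all_field.
Set Implicit Arguments. Unset Strict Implicit. Unset Printing Implicit Defensive.
Import GRing.Theory Num.Theory.
From mathcomp Require Import center.
Local Open Scope group_scope.

Section NonCommutingGraph.
Variable gT : finGroupType.
Variable G : {set gT}.

Definition nc_vertices : {set gT} := G :\: (center G).

(* Adjacency: distinct vertices u, v with uv <> vu (u <> v is implied). *)
Definition nc_adj (u v : gT) : bool :=
  [&& u \in nc_vertices, v \in nc_vertices & (u * v != v * u)%g].

Fixpoint nc_ball (k : nat) (u : gT) : {set gT} :=
  match k with
  | 0 => [set u]
  | k.+1 => nc_ball k u :|: [set w | [exists v in nc_ball k u, nc_adj v w]]
  end.

(* Graph distance d_{uv}: least k with v reachable from u in <= k steps.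
   (Every finite distance is < #|gT|, so searching k in [0, #|gT|] suffices.) *)
Definition nc_dist (u v : gT) : nat :=
  find (fun k => v \in nc_ball k u) (iota 0 #|gT|.+1).

Definition nc_distmx : 'M[algC]_#|nc_vertices| :=
  \matrix_(i, j) (nc_dist (enum_val i) (enum_val j))%:R%R.

End NonCommutingGraph.

(* Main.v *)
Require Import Defs.
From mathcomp Require Import all_boot all_order all_algebra all_fingroup all_solvable all_field.
Import GRing.Theory Num.Theory.
From mathcomp Require Import center ring zify.
Local Open Scope ring_scope.

Lemma sylv (R : comNzRingType) N k (A : 'M[R]_(N,k)) (B : 'M_(k,N)) :
  \det (1%:M - A *m B) = \det (1%:M - B *m A).
Proof.
have e1 : block_mx 1%:M A B 1%:M =
   block_mx 1%:M 0 B 1%:M *m block_mx 1%:M A 0 (1%:M - B *m A).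
  by rewrite mulmx_block !(mul1mx, mul0mx, mulmx0, mulmx1, addr0, add0r) addrC subrK.
have e2 : block_mx 1%:M A B 1%:M =
   block_mx 1%:M A 0 1%:M *m block_mx (1%:M - A *m B) 0 B 1%:M.
  by rewrite mulmx_block !(mul1mx, mul0mx, mulmx0, mulmx1, addr0, add0r) subrK.
have := congr1 determinant e1; rewrite e2 !det_mulmx det_lblock det_ublock.
by rewrite det_ublock det_lblock !det1 !mul1r !mulr1.
Qed.

Lemma det2b (R : comNzRingType) (a b c d : R) :
  \det (block_mx a%:M b%:M c%:M d%:M : 'M_(1+1)) = a * d - b * c.
Proof.
rewrite (expand_det_row _ (lshift 1 0)) big_ord_recl big_ord1 /cofactor !det_mx11 !mxE /=.
have e1 : (@lift (1+1) (lshift 1 (0 : 'I_1)) (0 : 'I_1)) = rshift 1 (0 : 'I_1) by apply/val_inj.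
have e2 : (@lift (1+1) ord0 (0 : 'I_1)) = rshift 1 (0 : 'I_1) by apply/val_inj.
have e3 : (@lift (1+1) (@lift (1+1) ord0 ord0) (0 : 'I_1)) = lshift 1 (0 : 'I_1) by apply/val_inj.
have e4 : (ord0 : 'I_(1+1)) = lshift 1 (0 : 'I_1) by apply/val_inj.
have e5 : (@lift (1+1) ord0 ord0) = rshift 1 (0 : 'I_1) by apply/val_inj.
have e6 : (@lift (1+1) (rshift 1 (0 : 'I_1)) (0 : 'I_1)) = lshift 1 (0 : 'I_1) by apply/val_inj.
rewrite ?e1 ?e2 ?e3 ?e5 ?e4 ?e6.
rewrite -[lshift 1 0]/(unsplit (inl 0)) -[rshift 1 0]/(unsplit (inr 0)) !unsplitK /=.
rewrite !mxE -[lshift 1 0]/(unsplit (inl 0)) -[rshift 1 0]/(unsplit (inr 0)) !unsplitK /= !mxE /=.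
rewrite /bump /=; ring.
Qed.



Lemma const11 (F : comNzRingType) n :
  (const_mx 1 : 'rV[F]_n) *m const_mx 1 = (n%:R)%:M.
Proof.
apply/matrixP=> i j; rewrite !ord1 !mxE /=.
under eq_bigr do rewrite !mxE mulr1.
by rewrite sumr_const card_ord.
Qed.

Lemma LA (F : fieldType) N n (X : 'M[F]_(N,n)) (a : 'cV[F]_N) (t : F) :
  (0 < n)%N -> (N + 2 = 4 * n)%N ->
  X^T *m X = 2%:M -> X^T *m a = 0 -> a^T *m a = ((2 * n - 2)%:R)%:M ->
  t != 0 -> t + 2 != 0 ->
  let b := X *m const_mx 1 in
  \det (t%:M - (X *m X^T + row_mx a b *m col_mx (2 *: a^T + b^T) (a^T + b^T) - 2%:M))
   = (t+2)^+(3*n-3) * t^+(n-1) *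
     (t^+2 - (6 * n%:R - 6) * t + (4 * n%:R ^+ 2 - 8 * n%:R)).
Proof.
move=> n0 hN hXX hXa haa ht ht2 b.
set s := t + 2.
have hs2 : s - 2 = t by rewrite /s addrK.
have hs : s != 0 by [].
set W := row_mx a b; set Z := col_mx _ _.
set R := s%:M - X *m X^T.
have -> : t%:M - (X *m X^T + W *m Z - 2%:M) = R - W *m Z.
  by apply/matrixP=> i j; rewrite !mxE /s; ring.
set Ri := s^-1 *: (1%:M + (s-2)^-1 *: (X *m X^T)).
have hXXXX : X *m X^T *m (X *m X^T) = 2 *: (X *m X^T).
  by rewrite !mulmxA -(mulmxA X) hXX mul_mx_scalar -scalemxAl.
have hRX : R *m (X *m X^T) = (s-2) *: (X *m X^T).
  by rewrite /R mulmxBl mul_scalar_mx hXXXX scalerBl.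
have hRRi : R *m Ri = 1%:M.
  rewrite /Ri -scalemxAr mulmxDr mulmx1 -scalemxAr hRX scalerA mulVf ?hs2 //.
  by rewrite scale1r /R subrK scale_scalar_mx mulVf.
have hdec : R - W *m Z = R *m (1%:M - (Ri *m W) *m Z).
  by rewrite mulmxBr mulmx1 !mulmxA hRRi mul1mx.
rewrite hdec det_mulmx sylv.
have hdetR : \det R = s ^+ N * (1 - s^-1 * 2) ^+ n.
  have -> : R = s *: (1%:M - X *m (s^-1 *: X^T)).
    by rewrite scalerBr -scalemxAr scalerA divff // scale1r scalemx1.
  rewrite detZ sylv -scalemxAl hXX scale_scalar_mx.
  have -> : 1%:M - (s^-1 * 2)%:M = (1 - s^-1 * 2)%:M :> 'M[F]_n.
    by apply/matrixP=> i j; rewrite !mxE; ring.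
  by rewrite det_scalar.
have hRia : Ri *m a = s^-1 *: a.
  by rewrite /Ri -scalemxAl mulmxDl mul1mx -scalemxAl -mulmxA hXa mulmx0 scaler0 addr0.
have hXXb : X *m X^T *m b = 2 *: b.
  by rewrite /b -mulmxA (mulmxA X^T) hXX mul_scalar_mx -scalemxAr.
have hRib : Ri *m b = (s-2)^-1 *: b.
  rewrite /Ri -scalemxAl mulmxDl mul1mx -scalemxAl hXXb scalerA -{1}[b]scale1r -scalerDl scalerA.
  congr (_ *: _); rewrite hs2 /s; field.
  by rewrite ht ht2.
have hbT : b^T = (const_mx 1)^T *m X^T by rewrite /b trmx_mul.
have hba : b^T *m a = 0 by rewrite hbT -mulmxA hXa mulmx0.
have hab : a^T *m b = 0.
  by rewrite /b mulmxA -[a^T *m X]trmxK trmx_mul trmxK hXa trmx0 mul0mx.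
have hbb : b^T *m b = (2 * n%:R)%:M.
  rewrite hbT /b mulmxA -(mulmxA _ X^T) hXX mul_mx_scalar -scalemxAl trmx_const const11.
  by rewrite scale_scalar_mx.
rewrite mul_mx_row hRia hRib /Z mul_col_row.
rewrite !mulmxDl -!scalemxAr -!scalemxAl haa hba hab hbb.
set m1 := (X in block_mx X _ _ _).
set m2 := (X in block_mx _ X _ _).
set m3 := (X in block_mx _ _ X _).
set m4 := (X in block_mx _ _ _ X).
have -> : m1 = (s^-1 * (2 * (2 * n - 2)%:R))%:M.
  by apply/matrixP=> i j; rewrite !mxE; ring.
have -> : m2 = ((s-2)^-1 * (2 * n%:R))%:M.
  by apply/matrixP=> i j; rewrite !mxE; ring.
have -> : m3 = (s^-1 * ((2 * n - 2)%:R))%:M.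
  by apply/matrixP=> i j; rewrite !mxE; ring.
have -> : m4 = ((s-2)^-1 * (2 * n%:R))%:M.
  by apply/matrixP=> i j; rewrite !mxE; ring.
rewrite [1%:M](scalar_mx_block 1 1) opp_block_mx add_block_mx.
have sB : forall c d : F, c%:M - d%:M = (c - d)%:M :> 'M_1.
  by move=> c d; apply/matrixP=> i j; rewrite !mxE; ring.
have z0 : (0 : 'M[F]_1) = (0:F)%:M by apply/matrixP=> i j; rewrite !mxE mul0rn.
rewrite z0 !sB det2b hdetR.
have -> : (2 * n - 2)%:R = 2 * n%:R - 2 :> F by rewrite natrB ?natrM //; lia.
case: n n0 hN {haa hbb hXX X hXa hRX hXXXX hRRi hdec hdetR Ri R hRia hRib hXXb hbT hba hab b W Z m1 m2 m3 m4} => // m _ hN.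
have -> : N = ((3 * m + 1) + m.+1)%N by lia.
have -> : (3 * m.+1 - 3 = 3 * m)%N by lia.
rewrite subn1 /= exprD -mulrA -exprMn.
have -> : s * (1 - s^-1 * 2) = t by rewrite /s; field.
rewrite exprS addn1 exprS.
rewrite hs2 /s; field.
by rewrite ht ht2.
Qed.


Section Dist.
Variable gT : finGroupType.
Variable G : {set gT}.

Lemma find_iota3 (P : pred nat) k :
  find P (iota 0 k.+3) = (if P 0 then 0 else if P 1 then 1 else if P 2 then 2 else (find P (iota 3 k)).+3)%N.
Proof. by rewrite /=; case: (P 0); case: (P 1); case: (P 2). Qed.

Lemma gT_big : (2 < #|gT|.+1)%N -> exists k, #|gT|.+1 = k.+3.
Proof. move=> h; exists (#|gT|.-2); by case: #|gT| h => [|[|[|k]]]. Qed.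
Local Open Scope group_scope.
Lemma ball1E u : nc_ball G 1 u = u |: [set w | nc_adj G u w].
Proof.
apply/setP=> w; rewrite /= !inE; congr (_ || _).
apply/existsP/idP => [[v /andP[]]|h]; first by rewrite inE => /eqP->.
by exists u; rewrite inE eqxx.
Qed.



Lemma dist0 u : nc_dist G u u = 0%N.
Proof. by rewrite /nc_dist; case: #|gT| => [|k] /=; rewrite inE eqxx. Qed.

Lemma ball0E u : nc_ball G 0 u = [set u]. Proof. by []. Qed.
Lemma ball2E u : nc_ball G 2 u = nc_ball G 1 u :|: [set w | [exists v in nc_ball G 1 u, nc_adj G v w]].
Proof. by []. Qed.

Lemma dist1 u v : (2 < #|gT|.+1)%N -> u \in nc_vertices G -> v \in nc_vertices G ->
  u * v != v * u -> nc_dist G u v = 1%N.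
Proof.
move=> /gT_big [k hk] hu hv huv; rewrite /nc_dist hk find_iota3; cbv beta.
have -> : (v \in nc_ball G 0 u) = false.
  by rewrite ball0E inE; apply/negbTE; apply: contra huv => /eqP->.
by rewrite ball1E !inE /nc_adj hu hv huv orbT.
Qed.

Lemma dist2 u v w : (2 < #|gT|.+1)%N -> u \in nc_vertices G -> v \in nc_vertices G ->
  w \in nc_vertices G -> u != v -> u * v = v * u -> u * w != w * u -> w * v != v * w ->
  nc_dist G u v = 2%N.
Proof.
move=> /gT_big [k hk] hu hv hw huv cuv cuw cwv; rewrite /nc_dist hk find_iota3; cbv beta.
rewrite ball0E inE eq_sym (negbTE huv) ball1E !inE eq_sym (negbTE huv) /nc_adj cuv eqxx !andbF /=.
case: ifP => // /negP []; apply/orP; right; apply/existsP; exists w.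
rewrite hw hv cwv !andbT in_setU1 inE; apply/orP; right.
by apply/existsP; exists u; rewrite inE eqxx hu hw cuw.
Qed.
End Dist.


Section Q.
Variables (n : nat) (gT : finGroupType) (x y : gT).
Hypotheses (n2 : (2 <= n)%N) (hx : (x ^+ (2 * n) = 1)%g) (hxy : (x ^+ n = y ^+ 2)%g)
  (hyx : (y * x = x^-1 * y)%g) (hcard : #|<<[set x; y]>>%g| = (4 * n)%N).
Local Open Scope group_scope.

Lemma yX v : v \in <[x]> -> y * v = v^-1 * y.
Proof.
case/cycleP => i ->; elim: i => [|i IH]; first by rewrite expg0 invg1 mulg1 mul1g.
by rewrite expgSr mulgA IH -mulgA hyx mulgA -invMg -expgS -expgSr.
Qed.

Definition K := <[x]> :|: <[x]> :* y.

Lemma K_group : group_set K.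
Proof.
apply/group_setP; split; first by rewrite !inE group1.
move=> u v; rewrite !inE !mem_rcoset => hu hv.
case/orP: hu => hu; case/orP: hv => hv.
- by rewrite groupM.
- by apply/orP; right; rewrite -mulgA groupM.
- apply/orP; right.
  have -> : u * v * y^-1 = (u * y^-1) * (y * v * y^-1) by rewrite !mulgA mulgKV.
  by rewrite yX // mulgK groupM ?groupV.
- apply/orP; left.
  have -> : u * v = (u * y^-1) * (y * (v * y^-1) * y^-1) * y ^+ 2.
    by rewrite expgS expg1 !mulgA !mulgKV.
  by rewrite -hxy yX // mulgK groupM ?groupX ?cycle_id // groupM // groupV.
Qed.

Lemma ord_le : (#[x] <= 2 * n)%N.
Proof. by apply: dvdn_leq; [lia | rewrite order_dvdn hx]. Qed.

Lemma HK : <<[set x; y]>> \subset K.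
Proof.
have -> : K = gval (Group K_group) by [].
rewrite gen_subG; apply/subsetP => u; rewrite !inE => /orP[] /eqP-> /=;
  by rewrite ?cycle_id // mem_rcoset mulgV group1 orbT.
Qed.

Lemma cardK : (#|K| <= 2 * #[x])%N.
Proof. by rewrite /K cardsU card_rcoset -orderE; lia. Qed.

Lemma ordx : #[x] = (2 * n)%N.
Proof. have := subset_leq_card HK; have := cardK; have := ord_le; lia. Qed.

Lemma HE : <<[set x; y]>> = K.
Proof.
apply/eqP; rewrite eqEcard HK hcard; have := cardK; rewrite ordx; lia.
Qed.

Lemma yNX : y \notin <[x]>.
Proof.
apply/negP => hy; have := subset_leq_card HK.
by rewrite /K rcoset_id // setUid hcard -orderE ordx; lia.
Qed.


Let H := <<[set x; y]>>.

Lemma inZ u : (u \in 'Z(H)) = [&& u \in H, u * x == x * u & u * y == y * u].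
Proof.
rewrite /center inE cent_gen; congr (_ && _).
rewrite centU !cent_set1 inE.
by congr (_ && _); apply/cent1P/eqP.
Qed.

Lemma inV u : (u \in nc_vertices H) = (u \in H) && ~~ (u \in 'Z(H)).
Proof. by rewrite /nc_vertices inE andbC. Qed.

Lemma modhelp r m : (0 < m)%N -> (r < 2 * m)%N -> (r %% m = if r < m then r else r - m)%N.
Proof.
move=> m0 h; case: ltnP => h2; first by rewrite modn_small.
rewrite -{1}(subnK h2) modnDr modn_small //; lia.
Qed.

Lemma n0 : (0 < n)%N. Proof. lia. Qed.

Lemma expx_eq i j : (x ^+ i == x ^+ j) = (i %% (2 * n) == j %% (2 * n))%N.
Proof. by rewrite eq_expg_mod_order ordx. Qed.

Lemma expx2_eq i j : (x ^+ (i + i) == x ^+ (j + j)) = (i %% n == j %% n)%N.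
Proof.
by rewrite expx_eq !addnn -!mul2n -!muln_modr eqn_pmul2l.
Qed.

Lemma commB i j : (x ^+ i * y * (x ^+ j * y) == x ^+ j * y * (x ^+ i * y)) = (i %% n == j %% n)%N.
Proof.
have e k l : x ^+ k * y * (x ^+ l * y) = x ^+ k * (x ^+ l)^-1 * (y * y).
  by rewrite mulgA -[x ^+ k * y * x ^+ l]mulgA (yX _ (mem_cycle x l)) !mulgA.
rewrite !e (inj_eq (mulIg _)) -(inj_eq (mulIg (x ^+ i * x ^+ j))) -expx2_eq.
have c : commute (x ^+ i) (x ^+ j) by apply: commuteX2.
by rewrite {1}c !mulgA mulgKV -(mulgA _ _ (x ^+ i)) mulVg mulg1 !expgD.
Qed.


Definition code u : option 'I_n :=
  [pick k : 'I_n | (u == x ^+ k * y) || (u == x ^+ (k + n) * y)].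

Lemma n20 : (0 < 2 * n)%N. Proof. lia. Qed.

Lemma codeB i : code (x ^+ i * y) = Some (Ordinal (ltn_pmod i n0)).
Proof.
have key (k : 'I_n) : ((x ^+ i * y == x ^+ k * y) || (x ^+ i * y == x ^+ (k + n) * y))
    = (k == i %% n :> nat)%N.
  have hk0 := ltn_ord k.
  rewrite !(inj_eq (mulIg _)) !expx_eq (modn_small (_ : k < 2 * n)%N); last lia.
  rewrite (modn_small (_ : k + n < 2 * n)%N); last lia.
  rewrite -(modn_dvdm i (dvdn_mull 2 (dvdnn n))).
  have := ltn_pmod i n20; have := ltn_ord k.
  move: (i %% (2 * n))%N => r hk hr; rewrite modhelp //; last exact: n0.
  case: ltnP => h; lia.
rewrite /code; case: pickP => [k hk | /(_ (Ordinal (ltn_pmod i n0)))].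
  by congr Some; apply/val_inj => /=; apply/eqP; rewrite -key.
by rewrite key /= eqxx.
Qed.

Lemma codeA u : u \in <[x]> -> code u = None.
Proof.
move=> hu; rewrite /code; case: pickP => // k /orP[]/eqP e; exfalso; move: yNX => /negP; apply.
  by rewrite (_ : y = (x ^+ k)^-1 * u) ?groupM ?groupV ?mem_cycle // e mulKg.
by rewrite (_ : y = (x ^+ (k + n))^-1 * u) ?groupM ?groupV ?mem_cycle // e mulKg.
Qed.


Lemma inH_A i : x ^+ i \in H.
Proof. by rewrite /H HE /K inE mem_cycle. Qed.

Lemma inH_B i : x ^+ i * y \in H.
Proof. by rewrite /H HE /K !inE mem_rcoset mulgK mem_cycle orbT. Qed.

Lemma Hcases u : u \in H -> (exists i, u = x ^+ i) \/ (exists i, u = x ^+ i * y).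
Proof.
rewrite /H HE /K inE mem_rcoset => /orP[/cycleP[i ->]|/cycleP[i e]]; first by left; exists i.
by right; exists i; rewrite -e mulgKV.
Qed.

Lemma xinv_eq i : (x ^+ i == (x ^+ i)^-1) = (i %% n == 0)%N.
Proof.
by rewrite eq_sym eq_invg_mul -expgD (_ : 1 = x ^+ (0 + 0)) // expx2_eq mod0n.
Qed.

Lemma ZA i : (x ^+ i \in 'Z(H)) = (i %% n == 0)%N.
Proof.
rewrite inZ inH_A (commuteX2 i 1 (commute_refl x)) eqxx /=.
by rewrite (yX _ (mem_cycle x i)) (inj_eq (mulIg _)) xinv_eq.
Qed.

Lemma inVA i : (x ^+ i \in nc_vertices H) = (i %% n != 0)%N.
Proof. by rewrite inV inH_A ZA. Qed.

Lemma inVB i : x ^+ i * y \in nc_vertices H.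
Proof.
rewrite inV inH_B inZ inH_B /=; apply/negP => /andP[/eqP h _].
move: h; rewrite -mulgA hyx mulgA mulgA -(commuteX2 i 1 (commute_refl x)) expg1.
move/mulIg/mulgI => h; have := xinv_eq 1; rewrite expg1 h eqxx modn_small //.
Qed.

Lemma commAB i j : (x ^+ i * (x ^+ j * y) == x ^+ j * y * x ^+ i) = (i %% n == 0)%N.
Proof.
rewrite -mulgA (yX _ (mem_cycle x i)) !mulgA (commuteX2 i j (commute_refl x)).
by rewrite (inj_eq (mulIg _)) (inj_eq (mulgI _)) xinv_eq.
Qed.

Lemma commV u v : u \in nc_vertices H -> v \in nc_vertices H ->
  (u * v == v * u) = (code u == code v).
Proof.
move=> hu hv.
have [[i ei]|[i ei]] := Hcases _ (setDP hu).1; have [[j ej]|[j ej]] := Hcases _ (setDP hv).1;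
  subst u v.
- by rewrite !codeA ?mem_cycle // eqxx; apply/eqP; apply: commuteX2.
- rewrite codeA ?mem_cycle // codeB commAB /=; apply/negbTE.
  by rewrite -inVA.
- rewrite (codeA _ (mem_cycle x j)) codeB eq_sym commAB /=; apply/negbTE.
  by rewrite -inVA.
- by rewrite !codeB commB.
Qed.


Let V := nc_vertices H.

Lemma one_xn : (1 : gT) != x ^+ n.
Proof.
rewrite (_ : 1 = x ^+ 0) // expx_eq mod0n modn_small; lia.
Qed.

Lemma VA_card : #|V :&: <[x]>| = (2 * n - 2)%N.
Proof.
have -> : V :&: <[x]> = <[x]> :\: [set 1; x ^+ n].
  apply/setP => u; rewrite in_setI (in_setD <[x]>) in_set2.
  case: (boolP (u \in <[x]>)) => hu; last by rewrite !andbF.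
  case/cycleP: hu => i ->; rewrite /V inVA !andbT (_ : 1 = x ^+ 0) // !expx_eq.
  rewrite mod0n (modn_small (_ : n < 2 * n)%N); last lia.
  rewrite -(modn_dvdm i (dvdn_mull 2 (dvdnn n))).
  have := ltn_pmod i n20; move: (i %% (2 * n))%N => r hr; rewrite modhelp //; last exact: n0.
  case: ltnP => h; apply/idP/idP; lia.
rewrite cardsD (setIidPr _) ?cards2 ?one_xn -?orderE ?ordx //.
by apply/subsetP => u; rewrite !inE => /orP[]/eqP->; rewrite ?group1 ?mem_cycle.
Qed.

Lemma VnA : V :\: <[x]> = <[x]> :* y.
Proof.
apply/setP => u; rewrite inE; apply/andP/idP => [[hu hV]|].
  have [[i ei]|[i ei]] := Hcases _ (setDP hV).1; subst u; first by rewrite mem_cycle in hu.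
  by rewrite mem_rcoset mulgK mem_cycle.
rewrite mem_rcoset => /cycleP[i e]; have -> : u = x ^+ i * y by rewrite -e mulgKV.
split; last exact: inVB.
apply/negP => h; move: yNX => /negP; apply.
have -> : y = (x ^+ i)^-1 * (x ^+ i * y) by rewrite mulKg.
by rewrite groupM ?groupV ?mem_cycle.
Qed.

Lemma cardV : (#|V| + 2 = 4 * n)%N.
Proof.
rewrite -(cardsID <[x]> V) VA_card VnA card_rcoset -orderE ordx; lia.
Qed.

Lemma codeNone : [set u in V | code u == None] = V :&: <[x]>.
Proof.
apply/setP => u; rewrite in_set in_setI; case: (boolP (u \in V)) => //= hV.
have [[i ei]|[i ei]] := Hcases _ (setDP hV).1; subst u.
  by rewrite codeA ?mem_cycle.
rewrite codeB /=; apply/esym/negP => h; move: yNX => /negP; apply.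
have -> : y = (x ^+ i)^-1 * (x ^+ i * y) by rewrite mulKg.
by rewrite groupM ?groupV ?mem_cycle.
Qed.

Lemma codeP u k : code u = Some k -> (u == x ^+ k * y) || (u == x ^+ (k + n) * y).
Proof. by rewrite /code; case: pickP => // k' hk [<-]. Qed.

Lemma codeSome k : #|[set u in V | code u == Some k]| = 2.
Proof.
have hk := ltn_ord k.
have -> : [set u in V | code u == Some k] = [set x ^+ k * y; x ^+ (k + n) * y].
  apply/setP => u; rewrite in_set in_set2; apply/andP/idP => [[_ /eqP/codeP]//|/orP[]/eqP->].
    split; first exact: inVB.
    by rewrite codeB; apply/eqP; congr Some; apply/val_inj; rewrite /= modn_small.
  split; first exact: inVB.
  rewrite codeB; apply/eqP; congr Some; apply/val_inj; rewrite /= modnDr modn_small //.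
rewrite cards2 (inj_eq (mulIg _)) expx_eq (modn_small (_ : k < 2 * n)%N); last lia.
rewrite (modn_small (_ : k + n < 2 * n)%N); last lia.
by case: eqP => //; lia.
Qed.


Local Open Scope ring_scope.

Lemma bigT : (2 < #|gT|.+1)%N.
Proof. have := max_card (mem H); rewrite /H hcard => h; rewrite ltnS; apply: leq_trans h; lia. Qed.

Lemma xV : x \in V.
Proof. by rewrite -[x]expg1 /V inVA modn_small. Qed.

Lemma yV : y \in V.
Proof. by rewrite -[y]mul1g -(expg0 x) /V inVB. Qed.

Lemma codex : code x = None.
Proof. by rewrite codeA // cycle_id. Qed.

Lemma codey : code y != None.
Proof. by rewrite -[y]mul1g -(expg0 x) codeB. Qed.

Lemma distE u v : u \in V -> v \in V ->
  nc_dist H u v = (if u == v then 0 else if code u == code v then 2 else 1)%N.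
Proof.
move=> hu hv; case: eqP => [<-|/eqP huv]; first exact: dist0.
case: (boolP (code u == code v)) => hc.
  have cuv : (u * v = v * u)%g by apply/eqP; rewrite commV.
  case hcu : (code u) => [k|].
    apply: (dist2 gT H u v x bigT hu hv xV huv cuv).
      by rewrite (commV _ _ hu xV) hcu codex.
    by rewrite (commV _ _ xV hv) codex -(eqP hc) hcu.
  apply: (dist2 gT H u v y bigT hu hv yV huv cuv).
    by rewrite (commV _ _ hu yV) hcu eq_sym codey.
  by rewrite (commV _ _ yV hv) -(eqP hc) hcu codey.
by apply: dist1 => //; [exact: bigT | rewrite (commV _ _ hu hv)].
Qed.

Definition Xm : 'M[algC]_(#|V|, n) := \matrix_(i, k) ((code (enum_val i) == Some k)%:R).
Definition am : 'cV[algC]_#|V| := \col_i ((code (enum_val i) == None)%:R).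

Lemma sum_code (c : option 'I_n) : \sum_(k < n) ((c == Some k)%:R : algC) = (c != None)%:R.
Proof.
case: c => [a|]; last by rewrite big1.
rewrite (bigD1 a) //= eqxx big1 ?addr0 // => k hk.
by rewrite (_ : (Some a == Some k) = false) //; apply/eqP => -[e]; rewrite e eqxx in hk.
Qed.

Lemma sum_code2 (c c' : option 'I_n) :
  \sum_(k < n) ((c == Some k)%:R * (c' == Some k)%:R : algC) = ((c == c') && (c != None))%:R.
Proof.
case: c => [a|]; last by rewrite eqxx andbF big1 // => k _; rewrite mul0r.
rewrite (bigD1 a) //= eqxx mul1r big1 ?addr0 ?andbT ?(eq_sym c') // => k hk.
by rewrite (_ : (Some a == Some k) = false) ?mul0r //; apply/eqP => -[e]; rewrite e eqxx in hk.
Qed.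

Lemma sum_card (P : pred gT) : \sum_(u in V) ((P u)%:R : algC) = #|[set u in V | P u]|%:R.
Proof.
rewrite -sum1_card (eq_bigl (fun u => (u \in V) && P u)) => [|u]; last by rewrite inE.
rewrite natr_sum big_mkcondr /=; apply: eq_bigr => u _; by case: (P u).
Qed.

Definition bm : 'cV[algC]_#|V| := Xm *m const_mx 1.

Lemma hD : nc_distmx H = Xm *m Xm^T + row_mx am bm *m col_mx (2 *: am^T + bm^T) (am^T + bm^T) - 2%:M.
Proof.
apply/matrixP => i j; rewrite mul_row_col.
have eX : \sum_k Xm i k * Xm^T k j = ((code (enum_val i) == code (enum_val j)) && (code (enum_val i) != None))%:R.
  under eq_bigr do rewrite !mxE; exact: sum_code2.
have eb k : \sum_j0 Xm k j0 * (const_mx 1 : 'cV[algC]_n) j0 ord0 = (code (enum_val k) != None)%:R.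
  under eq_bigr do rewrite !mxE mulr1; exact: sum_code.
rewrite mxE [in RHS]mxE [in RHS]mxE [in RHS]mxE eX !mxE !big_ord1 !mxE !eb distE ?enum_valP // (inj_eq enum_val_inj).
case: (eqVneq i j) => [<-|hij]; first by case: (code _) => [a|] /=; rewrite ?eqxx /=; ring.
move: (code (enum_val i)) (code (enum_val j)) => [a|] [b|] //=; try ring.
by case: eqP => _ /=; ring.
Qed.

Lemma hXX : Xm^T *m Xm = 2%:M.
Proof.
apply/matrixP => k l; rewrite !mxE; under eq_bigr do rewrite !mxE.
rewrite -(big_enum_val (fun u => (code u == Some k)%:R * (code u == Some l)%:R)) /=.
case: (eqVneq k l) => [<-|hkl].
  under eq_bigr do rewrite -natrM mulnb andbb.
  by rewrite sum_card codeSome.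
rewrite big1 // => u _; case: (code u) => [a|] //=; rewrite ?mul0r //.
case: eqP => [[->]|] /=; last by rewrite mul0r.
by rewrite (_ : (Some k == Some l) = false) ?mul1r //; apply/eqP => -[e]; rewrite e eqxx in hkl.
Qed.

Lemma hXa : Xm^T *m am = 0.
Proof.
apply/matrixP => k j; rewrite !mxE; apply: big1 => i _; rewrite !mxE.
by case: (code _) => [a|] /=; rewrite ?mulr0 ?mul0r.
Qed.

Lemma haa : am^T *m am = ((2 * n - 2)%:R)%:M.
Proof.
apply/matrixP => i j; rewrite !ord1 !mxE; under eq_bigr do rewrite !mxE.
rewrite -(big_enum_val (fun u => (code u == None)%:R * (code u == None)%:R)) /=.
under eq_bigr do rewrite -natrM mulnb andbb.
by rewrite sum_card codeNone VA_card mulr1n.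
Qed.

Lemma main_eval (t : algC) : t != 0 -> t + 2 != 0 ->
  \det (t%:M - nc_distmx H) = (t+2)^+(3*n-3) * t^+(n-1) *
     (t^+2 - (6 * n%:R - 6) * t + (4 * n%:R ^+ 2 - 8 * n%:R)).
Proof.
move=> ht ht2; rewrite hD.
exact: (LA algC #|V| n Xm am t n0 cardV hXX hXa haa ht ht2).
Qed.

End Q.


Lemma charpoly_eval (F : fieldType) N (A : 'M[F]_N) (t : F) :
  (char_poly A).[t] = \det (t%:M - A).
Proof.
rewrite /char_poly -horner_evalE -det_map_mx; congr (\det _).
apply/matrixP => i j; rewrite !mxE /= horner_evalE !hornerE.
by case: (i == j); rewrite /= ?mulr1n ?mulr0n ?hornerE.
Qed.

Lemma poly_eq_nat (p q : {poly algC}) : (forall k, p.[k.+1%:R] = q.[k.+1%:R]) -> p = q.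
Proof.
move=> h; apply/eqP; rewrite -subr_eq0; apply/eqP.
apply: (roots_geq_poly_eq0 (rs := [seq (k.+1)%:R | k <- iota 0 (size (p - q))])).
- by apply/allP => r /mapP [k _ ->]; rewrite rootE !hornerE h subrr.
- by rewrite map_inj_uniq ?iota_uniq // => a b /eqP; rewrite eqr_nat => /eqP [].
- by rewrite size_map size_iota.
Qed.

Theorem theorem3p1 (n : nat) (gT : finGroupType) (x y : gT) :
  (2 <= n)%N ->
  (x ^+ (2 * n) = 1)%g ->
  (x ^+ n = y ^+ 2)%g ->
  (y * x = x^-1 * y)%g ->
  #|<<[set x; y]>>%g| = (4 * n)%N ->
  char_poly (nc_distmx <<[set x; y]>>%g) =
    ('X + 2%:P) ^+ (3 * n - 3) * 'X ^+ (n - 1)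
    * ('X - (3%:R * (n%:R - 1) + sqrtC (5%:R * n%:R ^+ 2 - 10%:R * n%:R + 9%:R))%:P)
    * ('X - (3%:R * (n%:R - 1) - sqrtC (5%:R * n%:R ^+ 2 - 10%:R * n%:R + 9%:R))%:P)
    :> {poly algC}.
Proof.
move=> n2 hx hxy hyx hcard; apply: poly_eq_nat => k.
set t : algC := k.+1%:R.
have ht : t != 0 by rewrite pnatr_eq0.
have ht2 : t + 2 != 0 by rewrite /t -natrD pnatr_eq0.
rewrite charpoly_eval (main_eval n gT x y n2 hx hxy hyx hcard t ht ht2).
rewrite !hornerM !horner_exp hornerD hornerC !hornerX !hornerXsubC -!mulrA.
congr (_ * (_ * _)).
set r := sqrtC _; have hr : r ^+ 2 = 5%:R * n%:R ^+ 2 - 10%:R * n%:R + 9%:R by exact: sqrtCK.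
set a := 3%:R * (n%:R - 1).
have -> : (t - (a + r)) * (t - (a - r)) = (t - a) ^+ 2 - r ^+ 2 by ring.
rewrite hr /a; ring.
Qed.
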